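(* Let $K_1,\dots,K_m\subset\mathbb{R}^n$ be closed sets, each having the SOSH property at $\bar x\in K:=\bigcap_{l=1}^mK_l$, and suppose $\{K_l\}_{l=1}^m$ has linearly regular intersection at $\bar x$. Then $K$ has the SOSH property at $\bar x$.
   Context: For a closed set $C\subset\mathbb{R}^n$ and $\bar x\in C$, the regular normal cone is $\hat N_C(\bar x)=\{y:\langle y,x-\bar x\rangle\le o(\|x-\bar x\|)\text{ for all }x\in C\}$ and the limiting normal cone $N_C(\bar x)$ is the set of $y$ for which there exist $x_i\to\bar x$ with $x_i\in C$ and $y_i\in\hat N_C(x_i)$ with $y_i\to y$. A closed set $C$ has the SOSH property at $\bar x\in C$ if there exist $\delta>0$, $M>0$ such that $\langle v,x-\bar x\rangle\le M\|\bar x-x\|^2$ for all $x\in(\mathbb{B}(\bar x,\delta)\cap C)\setminus\{\bar x\}$ and all $v\in N_C(x)$ with $\|v\|=1$. Closed sets $K_1,\dots,K_m$ have linearly regular intersection at $x\in\bigcap_lK_l$ if $\sum_l v_l=0$ with $v_l\in N_{K_l}(x)$ implies $v_l=0$ for all $l$. *)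

(* Defs.v *)
From Stdlib Require Import Reals Lra.
From Stdlib Require Fin.
Open Scope R_scope.

Definition Vec (n : nat) : Type := Fin.t n -> R.

Fixpoint fsum (n : nat) : (Fin.t n -> R) -> R :=
  match n with
  | O => fun _ => 0
  | S k => fun f => f Fin.F1 + fsum k (fun i => f (Fin.FS i))
  end.

Definition vsub {n : nat} (x y : Vec n) : Vec n := fun i => x i - y i.
Definition vinner {n : nat} (x y : Vec n) : R := fsum n (fun i => x i * y i).
Definition vnorm {n : nat} (x : Vec n) : R := sqrt (vinner x x).

Definition closed_setV {n : nat} (C : Vec n -> Prop) : Prop :=
  forall x : Vec n,
    (forall eps, 0 < eps -> exists y, C y /\ vnorm (vsub x y) < eps) -> C x.

Definition reg_normal {n : nat} (C : Vec n -> Prop) (xb y : Vec n) : Prop :=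
  forall eps, 0 < eps -> exists delta, 0 < delta /\
    forall x, C x -> vnorm (vsub x xb) < delta ->
      vinner y (vsub x xb) <= eps * vnorm (vsub x xb).

Definition vconv {n : nat} (u : nat -> Vec n) (l : Vec n) : Prop :=
  forall eps, 0 < eps -> exists N, forall k, (N <= k)%nat -> vnorm (vsub (u k) l) < eps.

Definition lim_normal {n : nat} (C : Vec n -> Prop) (xb y : Vec n) : Prop :=
  exists (xs ys : nat -> Vec n),
    (forall k, C (xs k)) /\ (forall k, reg_normal C (xs k) (ys k)) /\
    vconv xs xb /\ vconv ys y.

Definition SOSH {n : nat} (C : Vec n -> Prop) (xb : Vec n) : Prop :=
  exists delta M, 0 < delta /\ 0 < M /\
    forall x, C x -> vnorm (vsub x xb) <= delta -> x <> xb ->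
      forall v, lim_normal C x v -> vnorm v = 1 ->
        vinner v (vsub x xb) <= M * (vnorm (vsub xb x)) ^ 2.

Definition vsum {n m : nat} (v : Fin.t m -> Vec n) : Vec n :=
  fun j => fsum m (fun l => v l j).

Definition lin_reg_inter {n m : nat} (K : Fin.t m -> Vec n -> Prop) (x : Vec n) : Prop :=
  forall v : Fin.t m -> Vec n,
    (forall l, lim_normal (K l) x (v l)) ->
    (forall j, vsum v j = 0) ->
    forall l j, v l j = 0.

Definition inter_sets {n m : nat} (K : Fin.t m -> Vec n -> Prop) : Vec n -> Prop :=
  fun x => forall l, K l x.

(* Main.v *)
Require Import Defs.
From Stdlib Require Import Reals.
From Stdlib Require Fin.
From Stdlib Require Import Lra Psatz List ZArith.
From Stdlib Require Import ClassicalEpsilon Classical.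
Open Scope R_scope.


Lemma fsum_ext n (f g : Fin.t n -> R) : (forall i, f i = g i) -> fsum n f = fsum n g.
Proof. revert f g; induction n; intros f g H; simpl; auto. rewrite H, (IHn (fun i => f (Fin.FS i)) (fun i => g (Fin.FS i))); auto. Qed.

Lemma fsum_plus n (f g : Fin.t n -> R) : fsum n (fun i => f i + g i) = fsum n f + fsum n g.
Proof. revert f g; induction n; intros f g; simpl. lra. rewrite IHn. lra. Qed.

Lemma fsum_scal n c (f : Fin.t n -> R) : fsum n (fun i => c * f i) = c * fsum n f.
Proof. revert f; induction n; intros f; simpl. lra. rewrite IHn. lra. Qed.

Lemma fsum_0 n : fsum n (fun _ => 0) = 0.
Proof. induction n; simpl; auto. rewrite IHn; lra. Qed.

Lemma fsum_le n (f g : Fin.t n -> R) : (forall i, f i <= g i) -> fsum n f <= fsum n g.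
Proof. revert f g; induction n; intros f g H; simpl. lra.
  assert (forall i, f (Fin.FS i) <= g (Fin.FS i)) by auto.
  specialize (IHn (fun i => f (Fin.FS i)) (fun i => g (Fin.FS i)) H0). specialize (H Fin.F1). lra. Qed.

Lemma fsum_nonneg n (f : Fin.t n -> R) : (forall i, 0 <= f i) -> 0 <= fsum n f.
Proof. intros H. rewrite <- (fsum_0 n). apply fsum_le; auto. Qed.

Lemma fsum_ge_term n (f : Fin.t n -> R) : (forall i, 0 <= f i) -> forall i, f i <= fsum n f.
Proof. revert f; induction n; intros f H i. inversion i.
  simpl. pattern i; apply Fin.caseS'.
  - assert (0 <= fsum n (fun i0 => f (Fin.FS i0))) by (apply fsum_nonneg; auto). lra.
  - intros q. specialize (IHn (fun i => f (Fin.FS i)) (fun i => H _) q). specialize (H Fin.F1). simpl in IHn. lra.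
Qed.

Lemma fsum_abs n (f : Fin.t n -> R) : Rabs (fsum n f) <= fsum n (fun i => Rabs (f i)).
Proof. revert f; induction n; intros f; simpl. rewrite Rabs_R0; lra.
  eapply Rle_trans. apply Rabs_triang. specialize (IHn (fun i => f (Fin.FS i))). lra. Qed.

Lemma fsum_swap n m (g : Fin.t m -> Fin.t n -> R) :
  fsum n (fun i => fsum m (fun l => g l i)) = fsum m (fun l => fsum n (fun i => g l i)).
Proof. revert g; induction m; intros g; simpl. apply fsum_0.
  rewrite fsum_plus. rewrite IHm. reflexivity. Qed.

Lemma fsum_cv n (u : nat -> Fin.t n -> R) (l : Fin.t n -> R) :
  (forall i, Un_cv (fun k => u k i) (l i)) -> Un_cv (fun k => fsum n (u k)) (fsum n l).
Proof. revert u l; induction n; intros u l H; simpl.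
  - intros e he; exists 0%nat; intros; unfold Rdist; rewrite Rminus_0_r, Rabs_R0; lra.
  - apply CV_plus. apply H. apply (IHn (fun k i => u k (Fin.FS i)) (fun i => l (Fin.FS i))). intros; apply H.
Qed.

Lemma vinner_sym n (a b : Vec n) : vinner a b = vinner b a.
Proof. unfold vinner; apply fsum_ext; intros; ring. Qed.

Lemma vinner_self_nonneg n (a : Vec n) : 0 <= vinner a a.
Proof. unfold vinner; apply fsum_nonneg; intros; nra. Qed.

Lemma vnorm_nonneg n (a : Vec n) : 0 <= vnorm a.
Proof. unfold vnorm; apply sqrt_pos. Qed.

Lemma vnorm_sq n (a : Vec n) : vnorm a * vnorm a = vinner a a.
Proof. unfold vnorm; apply sqrt_sqrt, vinner_self_nonneg. Qed.

Lemma vnorm_pow2 n (a : Vec n) : vnorm a ^ 2 = vinner a a.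
Proof. rewrite <- vnorm_sq; ring. Qed.

Lemma vinner_lin n (a b c : Vec n) (s t : R) :
  vinner (fun i => s * a i + t * b i) c = s * vinner a c + t * vinner b c.
Proof. unfold vinner. rewrite <- !fsum_scal, <- fsum_plus. apply fsum_ext; intros; ring. Qed.

Lemma vinner_ext n (a a' b b' : Vec n) : (forall i, a i = a' i) -> (forall i, b i = b' i) -> vinner a b = vinner a' b'.
Proof. intros; unfold vinner; apply fsum_ext; intros i; rewrite H, H0; auto. Qed.

Lemma vnorm_ext n (a a' : Vec n) : (forall i, a i = a' i) -> vnorm a = vnorm a'.
Proof. intros; unfold vnorm; f_equal; apply vinner_ext; auto. Qed.

Lemma coord_le_norm n (a : Vec n) i : Rabs (a i) <= vnorm a.
Proof. rewrite <- sqrt_Rsqr_abs. unfold vnorm. apply sqrt_le_1_alt. unfold vinner.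
  unfold Rsqr. apply (fsum_ge_term n (fun i => a i * a i)). intros; nra. Qed.

Lemma norm_le_sumabs n (a : Vec n) : vnorm a <= fsum n (fun i => Rabs (a i)).
Proof. unfold vnorm. assert (0 <= fsum n (fun i => Rabs (a i))) by (apply fsum_nonneg; intros; apply Rabs_pos).
  rewrite <- (sqrt_pow2 _ H). apply sqrt_le_1_alt. clear H. unfold vinner.
  induction n; simpl. lra.
  specialize (IHn (fun i => a (Fin.FS i))). simpl in IHn.
  assert (0 <= fsum n (fun i => Rabs (a (Fin.FS i)))) by (apply fsum_nonneg; intros; apply Rabs_pos).
  assert (a Fin.F1 * a Fin.F1 = Rabs (a Fin.F1) * Rabs (a Fin.F1)).
  { rewrite <- Rabs_mult. rewrite Rabs_pos_eq; nra. }
  pose proof (Rabs_pos (a Fin.F1)). nra.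
Qed.

Lemma vinner_zero_l n (a b : Vec n) : (forall i, a i = 0) -> vinner a b = 0.
Proof. intros H; unfold vinner; rewrite <- (fsum_0 n); apply fsum_ext; intros; rewrite H; ring. Qed.

Lemma vinner_self_zero n (a : Vec n) : vinner a a = 0 -> forall i, a i = 0.
Proof. intros H i. pose proof (fsum_ge_term n (fun i => a i * a i) ltac:(intros; nra) i).
  unfold vinner in H. nra. Qed.

Lemma vnorm_zero n (a : Vec n) : vnorm a = 0 -> forall i, a i = 0.
Proof. intros H; apply vinner_self_zero. rewrite <- vnorm_sq, H; ring. Qed.

Lemma quad_CS A B C : 0 <= A -> 0 <= B -> (forall s t, 0 <= s*s*A - 2*s*t*C + t*t*B) -> C*C <= A*B.
Proof. intros HA HB H.
  destruct (Req_dec A 0) as [HA0|HA0].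
  - destruct (Req_dec C 0) as [HC|HC]. subst; nra.
    specialize (H ((B+1)/C) 1). subst A.
    assert ((B+1)/C*1*C = B+1) by (field; auto). nra.
  - specialize (H C A). nra.
Qed.

Lemma CS n (a b : Vec n) : Rabs (vinner a b) <= vnorm a * vnorm b.
Proof.
  assert (Hq : vinner a b * vinner a b <= vinner a a * vinner b b).
  { apply quad_CS; try apply vinner_self_nonneg. intros s t.
    pose proof (vinner_self_nonneg n (fun i => s * a i - t * b i)).
    replace (vinner (fun i => s * a i - t * b i) (fun i => s * a i - t * b i)) with
      (s*s*vinner a a - 2*s*t*vinner a b + t*t*vinner b b) in H; auto.
    symmetry. unfold vinner. rewrite (fsum_ext n _ (fun i => (s*s) * (a i * a i) + (-(2*s*t)) * (a i * b i) + (t*t) * (b i * b i))).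
    rewrite !fsum_plus, !fsum_scal. ring. intros; ring. }
  rewrite <- !vnorm_sq in Hq.
  pose proof (vnorm_nonneg n a); pose proof (vnorm_nonneg n b).
  rewrite <- (sqrt_Rsqr_abs). rewrite <- (sqrt_pow2 (vnorm a * vnorm b)) by nra.
  apply sqrt_le_1_alt. unfold Rsqr. nra.
Qed.

Lemma CS' n (a b : Vec n) : vinner a b <= vnorm a * vnorm b.
Proof. pose proof (CS n a b). pose proof (Rle_abs (vinner a b)). lra. Qed.

Lemma vnorm_scal n c (a : Vec n) : vnorm (fun i => c * a i) = Rabs c * vnorm a.
Proof. unfold vnorm. rewrite <- sqrt_Rsqr_abs. rewrite <- sqrt_mult_alt by apply Rle_0_sqr.
  f_equal. unfold vinner, Rsqr. rewrite <- fsum_scal. apply fsum_ext; intros; ring. Qed.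

Lemma vnorm_triang n (a b : Vec n) : vnorm (fun i => a i + b i) <= vnorm a + vnorm b.
Proof. pose proof (vnorm_nonneg n a); pose proof (vnorm_nonneg n b). pose proof (vnorm_nonneg n (fun i => a i + b i)).
  apply (Rsqr_incr_0_var); unfold Rsqr; try lra.
  rewrite vnorm_sq. pose proof (CS' n a b).
  replace (vinner (fun i => a i + b i) (fun i => a i + b i)) with (vinner a a + 2 * vinner a b + vinner b b).
  rewrite <- (vnorm_sq n a), <- (vnorm_sq n b). nra.
  symmetry. unfold vinner. rewrite (fsum_ext n _ (fun i => (a i * a i) + 2 * (a i * b i) + (b i * b i))).
  rewrite !fsum_plus, !fsum_scal. ring. intros; ring.
Qed.

Lemma vsub_sym n (a b : Vec n) : vnorm (vsub a b) = vnorm (vsub b a).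
Proof. rewrite (vnorm_ext n (vsub b a) (fun i => (-1) * vsub a b i)). rewrite vnorm_scal. replace (Rabs (-1)) with 1. ring. rewrite Rabs_left; lra.
  intros; unfold vsub; ring. Qed.

Lemma vsub_triang n (a b c : Vec n) : vnorm (vsub a c) <= vnorm (vsub a b) + vnorm (vsub b c).
Proof. rewrite (vnorm_ext n (vsub a c) (fun i => vsub a b i + vsub b c i)). apply vnorm_triang.
  intros; unfold vsub; ring. Qed.

Lemma choice_fun {A B : Type} (P : A -> B -> Prop) : (forall a, exists r, P a r) -> exists f, forall a, P a (f a).
Proof. intros H. exists (fun a => proj1_sig (constructive_indefinite_description _ (H a))).
  intros a. exact (proj2_sig (constructive_indefinite_description _ (H a))). Qed.

Lemma vconv_coord n (u : nat -> Vec n) l : vconv u l -> forall i, Un_cv (fun k => u k i) (l i).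
Proof. intros H i e he. destruct (H e he) as [N HN]. exists N. intros k hk. unfold Rdist.
  eapply Rle_lt_trans; [apply (coord_le_norm n (vsub (u k) l) i)|]. apply HN; lia. Qed.

Lemma coord_vconv n (u : nat -> Vec n) l : (forall i, Un_cv (fun k => u k i) (l i)) -> vconv u l.
Proof. intros H.
  assert (Hc : Un_cv (fun k => fsum n (fun i => Rabs (u k i - l i))) (fsum n (fun _ => 0))).
  { apply fsum_cv. intros i. replace 0 with (Rabs (l i - l i)) by (rewrite Rminus_eq_0; apply Rabs_R0).
    apply cv_cvabs. apply CV_minus; auto. intros e he; exists 0%nat; intros; unfold Rdist; rewrite Rminus_eq_0, Rabs_R0; lra. }
  rewrite fsum_0 in Hc. intros e he. destruct (Hc e he) as [N HN]. exists N; intros k hk.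
  specialize (HN k ltac:(lia)). unfold Rdist in HN. rewrite Rminus_0_r in HN.
  eapply Rle_lt_trans; [apply norm_le_sumabs|]. unfold vsub. eapply Rle_lt_trans; [apply Rle_abs|]. auto. Qed.

Lemma vinner_cv n (a b : nat -> Vec n) A B : vconv a A -> vconv b B -> Un_cv (fun k => vinner (a k) (b k)) (vinner A B).
Proof. intros Ha Hb. unfold vinner. apply (fsum_cv n (fun k i => a k i * b k i)). intros i.
  apply CV_mult; apply vconv_coord; auto. Qed.

Lemma vnorm_cv n (a : nat -> Vec n) A : vconv a A -> Un_cv (fun k => vnorm (a k)) (vnorm A).
Proof. intros Ha. unfold vnorm. apply (continuity_seq sqrt (fun k => vinner (a k) (a k))).
  apply continuity_pt_sqrt, vinner_self_nonneg. apply vinner_cv; auto. Qed.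

Lemma lim_le (a b : nat -> R) A B : Un_cv a A -> Un_cv b B -> (exists N, forall k, (N <= k)%nat -> a k <= b k) -> A <= B.
Proof. intros Ha Hb [N HN]. apply Rle_cv_lim with (Un := fun k => a (k + N)%nat) (Vn := fun k => b (k + N)%nat).
  intros; apply HN; lia. apply CV_shift'; auto. apply CV_shift'; auto. Qed.

Lemma cv_const c : Un_cv (fun _ => c) c.
Proof. intros e he; exists 0%nat; intros; unfold Rdist; rewrite Rminus_eq_0, Rabs_R0; lra. Qed.

Fixpoint build (pick : nat -> nat -> nat) (k : nat) : nat :=
  match k with O => pick O O | S k' => pick (S (build pick k')) (S k') end.

Lemma inc_ge (phi : nat -> nat) : (forall k, (phi k < phi (S k))%nat) -> forall k, (k <= phi k)%nat.
Proof. intros H k; induction k. lia. specialize (H k); lia. Qed.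

Lemma inc_mono (phi : nat -> nat) : (forall k, (phi k < phi (S k))%nat) -> forall k j, (k <= j)%nat -> (phi k <= phi j)%nat.
Proof. intros H k j hkj; induction hkj. lia. specialize (H m); lia. Qed.

Lemma cv_subseq (s : nat -> R) l phi : (forall k, (phi k < phi (S k))%nat) -> Un_cv s l -> Un_cv (fun k => s (phi k)) l.
Proof. intros Hp H e he. destruct (H e he) as [N HN]. exists N; intros k hk. apply HN.
  pose proof (inc_ge phi Hp k); lia. Qed.

Lemma ext1 (u : nat -> R) B : (forall k, Rabs (u k) <= B) ->
  exists phi, (forall k, (phi k < phi (S k))%nat) /\ exists l, Un_cv (fun k => u (phi k)) l.
Proof. intros Hb.
  destruct (Bolzano_Weierstrass u (fun c => -B <= c <= B) (compact_P3 (-B) B)) as [l Hl].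
  { intros k; specialize (Hb k). pose proof (Rle_abs (u k)). pose proof (Rle_abs (- u k)). rewrite Rabs_Ropp in H0. lra. }
  assert (Hp : forall N k, exists p, (N <= p)%nat /\ Rabs (u p - l) < / (INR k + 1)).
  { intros N k. assert (hpos : 0 < / (INR k + 1)) by (apply Rinv_0_lt_compat; pose proof (pos_INR k); lra).
    destruct (Hl (disc l (mkposreal _ hpos)) N) as [p [hp1 hp2]].
    exists (mkposreal _ hpos). intros y hy; exact hy.
    exists p; split; auto. }
  destruct (choice_fun (fun (Nk : nat * nat) p => (fst Nk <= p)%nat /\ Rabs (u p - l) < / (INR (snd Nk) + 1))) as [pk Hpk].
  { intros [N k]; apply Hp. }
  set (pick := fun N k => pk (N, k)).
  exists (build pick). split.
  - assert (Hge : forall N k, (N <= pick N k)%nat) by (intros N k; apply (Hpk (N, k))).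
    intros k. simpl. specialize (Hge (S (build pick k)) (S k)). lia.
  - exists l. intros e he. destruct (archimed_cor1 e he) as [N [HN1 HN2]]. exists N. intros k hk.
    assert (Rabs (u (build pick k) - l) < / (INR k + 1)).
    { destruct k; simpl; unfold pick. apply (Hpk (0,0)%nat). apply (Hpk (S (build pick k), S k)). }
    unfold Rdist. eapply Rlt_trans; [exact H|].
    eapply Rle_lt_trans; [|exact HN1].
    apply Rinv_le_contravar. apply lt_0_INR; lia. apply le_INR in hk. lra.
Qed.

Lemma extr_list {I : Type} (u : nat -> I -> R) B (Hb : forall k i, Rabs (u k i) <= B) (lst : list I) :
  exists phi, (forall k, (phi k < phi (S k))%nat) /\ forall i, In i lst -> exists l, Un_cv (fun k => u (phi k) i) l.
Proof. induction lst as [|i lst IH].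
  - exists (fun k => k). split. intros; lia. intros i [].
  - destruct IH as [phi [Hphi Hl]].
    destruct (ext1 (fun k => u (phi k) i) B (fun k => Hb _ _)) as [psi [Hpsi [li Hli]]].
    exists (fun k => phi (psi k)). split.
    + intros k. specialize (Hpsi k). pose proof (inc_mono phi Hphi (S (psi k)) (psi (S k)) Hpsi). specialize (Hphi (psi k)). lia.
    + intros j [<-|hj]. exists li; auto.
      destruct (Hl j hj) as [lj Hlj]. exists lj. apply (cv_subseq (fun k => u (phi k) j) lj psi Hpsi Hlj).
Qed.

Fixpoint fin_enum n : list (Fin.t n) :=
  match n with O => nil | S n' => Fin.F1 :: map Fin.FS (fin_enum n') end.

Lemma fin_enum_in n (i : Fin.t n) : In i (fin_enum n).
Proof. induction n. inversion i. pattern i; apply Fin.caseS'. simpl; auto.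
  intros p. simpl. right. apply in_map. auto. Qed.

Lemma extr_vec m n (u : nat -> Fin.t m -> Vec n) B : (forall k l, vnorm (u k l) <= B) ->
  exists phi, (forall k, (phi k < phi (S k))%nat) /\ exists L, forall l, vconv (fun k => u (phi k) l) (L l).
Proof. intros Hb.
  destruct (extr_list (fun k (li : Fin.t m * Fin.t n) => u k (fst li) (snd li)) B) with (lst := list_prod (fin_enum m) (fin_enum n))
    as [phi [Hphi Hl]].
  { intros k [l i]; simpl. eapply Rle_trans; [apply coord_le_norm|apply Hb]. }
  exists phi; split; auto.
  destruct (choice_fun (fun (li : Fin.t m * Fin.t n) r => Un_cv (fun k => u (phi k) (fst li) (snd li)) r)) as [L HL].
  { intros [l i]. apply (Hl (l,i)). apply in_prod; apply fin_enum_in. }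
  exists (fun l i => L (l, i)). intros l. apply coord_vconv. intros i. apply (HL (l, i)).
Qed.

Lemma cv_inv0 : Un_cv (fun k => / (INR k + 1)) 0.
Proof. intros e he. destruct (archimed_cor1 e he) as [N [HN1 HN2]]. exists N. intros k hk.
  unfold Rdist. rewrite Rminus_0_r. assert (0 < INR k + 1) by (pose proof (pos_INR k); lra).
  rewrite Rabs_pos_eq by (left; apply Rinv_0_lt_compat; lra).
  eapply Rle_lt_trans; [|exact HN1].
  apply Rinv_le_contravar. apply lt_0_INR; lia. apply le_INR in hk. lra. Qed.

Lemma exists_min m n (Sset : (Fin.t m -> Vec n) -> Prop) (f : (Fin.t m -> Vec n) -> R) B :
  (exists p, Sset p) -> (forall p, Sset p -> forall l, vnorm (p l) <= B) ->
  (forall u p, (forall k, Sset (u k)) -> (forall l, vconv (fun k => u k l) (p l)) -> Sset p /\ Un_cv (fun k => f (u k)) (f p)) ->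
  (forall p, Sset p -> 0 <= f p) ->
  exists p, Sset p /\ forall q, Sset q -> f p <= f q.
Proof. intros [p0 Hp0] Hb Hcl Hpos.
  set (E := fun r => exists p, Sset p /\ r = - f p).
  destruct (completeness E) as [M [HM1 HM2]].
  { exists 0. intros r [p [hp ->]]. specialize (Hpos p hp). lra. }
  { exists (- f p0), p0; auto. }
  assert (Hk : forall k : nat, exists p, Sset p /\ - f p > M - / (INR k + 1)).
  { intros k. apply NNPP; intros Hn. assert (hpos : 0 < / (INR k + 1)) by (apply Rinv_0_lt_compat; pose proof (pos_INR k); lra).
    assert (M <= M - / (INR k + 1)); [|lra]. apply HM2. intros r [p [hp ->]].
    apply Rnot_gt_le. intros hg. apply Hn. exists p; auto. }
  destruct (choice_fun (fun k p => Sset p /\ - f p > M - / (INR k + 1)) Hk) as [u Hu].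
  destruct (extr_vec m n u B) as [phi [Hphi [L HL]]]. { intros k l; apply Hb, Hu. }
  destruct (Hcl (fun k => u (phi k)) L) as [HSL Hf]. intros; apply Hu. auto.
  exists L; split; auto. intros q hq.
  assert (f L <= - M).
  { apply (lim_le (fun k => f (u (phi k))) (fun k => - M + / (INR k + 1)) (f L) (-M)); [exact Hf| |].
    pose proof (CV_plus (fun _ => -M) (fun k => / (INR k + 1)) (-M) 0 (cv_const _) cv_inv0) as Hc.
    rewrite Rplus_0_r in Hc. exact Hc.
    exists 0%nat. intros k _. destruct (Hu (phi k)) as [_ h].
    pose proof (inc_ge phi Hphi k). apply le_INR in H.
    assert (/ (INR (phi k) + 1) <= / (INR k + 1)). { apply Rinv_le_contravar. pose proof (pos_INR k); lra. lra. }
    lra. }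
  assert (- f q <= M) by (apply HM1; exists q; auto). lra.
Qed.

Lemma vinner_scal_l n c (a b : Vec n) : vinner (fun i => c * a i) b = c * vinner a b.
Proof. unfold vinner; rewrite <- fsum_scal; apply fsum_ext; intros; ring. Qed.

Lemma vconv_sub n (u : nat -> Vec n) l c : vconv u l -> vconv (fun k => vsub (u k) c) (vsub l c).
Proof. intros H e he; destruct (H e he) as [N HN]; exists N; intros k hk.
  rewrite (vnorm_ext _ _ (vsub (u k) l)); auto. intros; unfold vsub; ring. Qed.

Lemma vconv_const n (c : Vec n) : vconv (fun _ => c) c.
Proof. intros e he; exists 0%nat; intros. rewrite (vnorm_ext _ _ (fun i => 0 * c i)).
  rewrite vnorm_scal, Rabs_R0. lra. intros; unfold vsub; ring. Qed.

Lemma vnorm_zero_vec n (a : Vec n) : (forall i, a i = 0) -> vnorm a = 0.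
Proof. intros H. rewrite (vnorm_ext _ _ (fun i => 0 * a i)). rewrite vnorm_scal, Rabs_R0; ring.
  intros; rewrite H; ring. Qed.

Lemma reg_scal n (C : Vec n -> Prop) x w c : 0 <= c -> reg_normal C x w -> reg_normal C x (fun i => c * w i).
Proof. intros hc H e he. destruct (Req_dec c 0) as [->|hc0].
  - exists 1; split; [lra|]. intros y _ _. rewrite vinner_scal_l. pose proof (vnorm_nonneg _ (vsub y x)). nra.
  - destruct (H (e / c)) as [d [hd Hd]]. apply Rdiv_lt_0_compat; lra.
    exists d; split; auto. intros y hy hyd. rewrite vinner_scal_l. specialize (Hd y hy hyd).
    apply Rmult_le_compat_l with (r := c) in Hd; [|lra]. replace (c * (e / c * vnorm (vsub y x))) with (e * vnorm (vsub y x)) in Hd by (field; lra). auto.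
Qed.

Lemma reg_of_quad n (C : Vec n -> Prop) p w r c : 0 < r -> 0 <= c ->
  (forall y, C y -> vnorm (vsub y p) < r -> vinner w (vsub y p) <= c * vnorm (vsub y p) ^ 2) -> reg_normal C p w.
Proof. intros hr hc H e he. exists (Rmin r (e / (c + 1))). split. apply Rmin_pos; auto. apply Rdiv_lt_0_compat; lra.
  intros y hy hd. pose proof (Rmin_l r (e / (c + 1))). pose proof (Rmin_r r (e / (c + 1))).
  specialize (H y hy ltac:(lra)). pose proof (vnorm_nonneg _ (vsub y p)) as hn.
  set (t := vnorm (vsub y p)) in *.
  assert (t * (c + 1) <= e). { assert (t < e / (c+1)) by lra. apply Rmult_lt_compat_r with (r := c + 1) in H2; [|lra].
    replace (e / (c + 1) * (c + 1)) with e in H2 by (field; lra). lra. }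
  nra.
Qed.

Lemma reg_lim n (C : Vec n -> Prop) x w : C x -> reg_normal C x w -> lim_normal C x w.
Proof. intros hx hw. exists (fun _ => x), (fun _ => w). repeat split; auto; apply vconv_const. Qed.

Lemma closed_lim n (C : Vec n -> Prop) (u : nat -> Vec n) l : closed_setV C -> (forall k, C (u k)) -> vconv u l -> C l.
Proof. intros Hc Hu Hl. apply Hc. intros e he. destruct (Hl e he) as [N HN]. exists (u N). split; auto.
  rewrite vsub_sym. apply HN; lia. Qed.

Lemma fsum_scal_r n c (f : Fin.t n -> R) : fsum n (fun i => f i * c) = fsum n f * c.
Proof. rewrite (fsum_ext n _ (fun i => c * f i)) by (intros; ring). rewrite fsum_scal; ring. Qed.

Lemma vinner_vsum n m (w : Fin.t m -> Vec n) X : vinner (vsum w) X = fsum m (fun l => vinner (w l) X).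
Proof. unfold vinner, vsum. rewrite (fsum_ext n _ (fun i => fsum m (fun l => w l i * X i))).
  apply fsum_swap. intros i. rewrite fsum_scal_r. auto. Qed.

Lemma vnorm_vsum n m (w : Fin.t m -> Vec n) : vnorm (vsum w) <= fsum m (fun l => vnorm (w l)).
Proof. induction m; simpl.
  - rewrite vnorm_zero_vec; [lra|]. intros; reflexivity.
  - eapply Rle_trans; [|apply Rplus_le_compat_l; apply (IHm (fun l => w (Fin.FS l)))].
    apply vnorm_triang.
Qed.

Lemma unif_fin m (P : Fin.t m -> R -> R -> Prop) :
  (forall l d d' M M', P l d M -> 0 < d' <= d -> M <= M' -> P l d' M') ->
  (forall l, exists d M, 0 < d /\ 0 < M /\ P l d M) -> exists d M, 0 < d /\ 0 < M /\ forall l, P l d M.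
Proof. revert P; induction m; intros P Hmono H.
  - exists 1, 1; repeat split; try lra. intros l; inversion l.
  - destruct (IHm (fun l => P (Fin.FS l))) as [d [M [hd [hM HP]]]]. intros; eapply Hmono; eauto. intros; apply H.
    destruct (H Fin.F1) as [d1 [M1 [hd1 [hM1 HP1]]]].
    exists (Rmin d d1), (Rmax M M1). split. apply Rmin_pos; auto. split. eapply Rlt_le_trans; [exact hM|apply Rmax_l].
    intros l. pattern l; apply Fin.caseS'.
    + eapply Hmono; eauto. split. apply Rmin_pos; auto. apply Rmin_r. apply Rmax_r.
    + intros q. eapply Hmono; eauto. split. apply Rmin_pos; auto. apply Rmin_l. apply Rmax_l.
Qed.

Lemma unifA n m (K : Fin.t m -> Vec n -> Prop) xb : lin_reg_inter K xb ->
  exists r C, 0 < r /\ 0 < C /\ forall (y w : Fin.t m -> Vec n),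
    (forall l, K l (y l) /\ vnorm (vsub (y l) xb) < r /\ reg_normal (K l) (y l) (w l)) ->
    fsum m (fun l => vnorm (w l)) <= C * vnorm (vsum w).
Proof. intros Hlr. apply NNPP. intros Hn.
  assert (Hk : forall k : nat, exists yw : (Fin.t m -> Vec n) * (Fin.t m -> Vec n),
    (forall l, K l (fst yw l) /\ vnorm (vsub (fst yw l) xb) < / (INR k + 1) /\ reg_normal (K l) (fst yw l) (snd yw l)) /\
    fsum m (fun l => vnorm (snd yw l)) > (INR k + 1) * vnorm (vsum (snd yw))).
  { intros k. apply NNPP; intros Hk. apply Hn. exists (/ (INR k + 1)), (INR k + 1).
    assert (0 < INR k + 1) by (pose proof (pos_INR k); lra).
    split. apply Rinv_0_lt_compat; lra. split. lra. intros y w Hyw. apply Rnot_gt_le. intros hg.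
    apply Hk. exists (y, w). simpl. split; auto. }
  destruct (choice_fun _ Hk) as [yw Hyw].
  set (S := fun k => fsum m (fun l => vnorm (snd (yw k) l))).
  assert (HSpos : forall k, 0 < S k).
  { intros k. destruct (Hyw k) as [_ h]. pose proof (vnorm_nonneg _ (vsum (snd (yw k)))).
    pose proof (pos_INR k). unfold S. nra. }
  set (w' := fun k l i => / S k * snd (yw k) l i).
  assert (Hw'n : forall k l, vnorm (w' k l) = / S k * vnorm (snd (yw k) l)).
  { intros k l. unfold w'. rewrite vnorm_scal. rewrite Rabs_pos_eq; auto. left; apply Rinv_0_lt_compat; auto. }
  destruct (extr_vec m n w' 1) as [phi [Hphi [W HW]]].
  { intros k l. rewrite Hw'n. specialize (HSpos k).
    pose proof (fsum_ge_term m (fun l => vnorm (snd (yw k) l)) (fun l => vnorm_nonneg _ _) l).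
    fold (S k) in H. apply (Rmult_le_reg_l (S k)); auto. rewrite <- Rmult_assoc, Rinv_r; lra. }
  assert (HWn : forall l, lim_normal (K l) xb (W l)).
  { intros l. exists (fun k => fst (yw (phi k)) l), (fun k => w' (phi k) l). split; [|split; [|split]].
    - intros k; apply (Hyw (phi k)).
    - intros k. apply reg_scal. left; apply Rinv_0_lt_compat; auto. apply (Hyw (phi k)).
    - intros e he. destruct (archimed_cor1 e he) as [N [HN1 HN2]]. exists N. intros k hk.
      destruct (Hyw (phi k)) as [H1 _]. destruct (H1 l) as [_ [h _]]. eapply Rlt_trans; [exact h|].
      eapply Rle_lt_trans; [|exact HN1]. pose proof (inc_ge phi Hphi k).
      apply Rinv_le_contravar. apply lt_0_INR; lia. apply le_INR in H. apply le_INR in hk. lra.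
    - apply HW. }
  assert (Hsum0 : forall j, vsum W j = 0).
  { intros j. apply (UL_sequence (fun k => vsum (w' (phi k)) j)).
    - unfold vsum. apply (fsum_cv m (fun k l => w' (phi k) l j)). intros l. apply (vconv_coord n (fun k => w' (phi k) l) (W l)), HW.
    - intros e he. destruct (archimed_cor1 e he) as [N [HN1 HN2]]. exists N. intros k hk. unfold Rdist. rewrite Rminus_0_r.
      eapply Rle_lt_trans; [apply (coord_le_norm n (vsum (w' (phi k))) j)|].
      rewrite (vnorm_ext _ _ (fun i => / S (phi k) * vsum (snd (yw (phi k))) i)).
      2:{ intros i. unfold vsum, w'. rewrite fsum_scal. auto. }
      rewrite vnorm_scal. rewrite Rabs_pos_eq by (left; apply Rinv_0_lt_compat; auto).
      destruct (Hyw (phi k)) as [_ h]. fold (S (phi k)) in h. specialize (HSpos (phi k)).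
      pose proof (inc_ge phi Hphi k). apply le_INR in H. apply le_INR in hk.
      assert (vnorm (vsum (snd (yw (phi k)))) / S (phi k) < / (INR (phi k) + 1)).
      { pose proof (pos_INR (phi k)). apply (Rmult_lt_reg_r (S (phi k) * (INR (phi k) + 1))). apply Rmult_lt_0_compat; [auto| pose proof (pos_INR (phi k)); lra].
        replace (vnorm (vsum (snd (yw (phi k)))) / S (phi k) * (S (phi k) * (INR (phi k) + 1))) with
          ((INR (phi k) + 1) * vnorm (vsum (snd (yw (phi k))))) by (field; lra).
        replace (/ (INR (phi k) + 1) * (S (phi k) * (INR (phi k) + 1))) with (S (phi k)) by (field; lra). lra. }
      unfold Rdiv in H0. rewrite Rmult_comm in H0. eapply Rlt_le_trans; [exact H0|].
      eapply Rle_trans with (/ INR N); [|lra]. apply Rinv_le_contravar. apply lt_0_INR; lia. lra. }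
  assert (HW0 := Hlr W HWn Hsum0).
  assert (Hone : fsum m (fun l => vnorm (W l)) = 1).
  { apply (UL_sequence (fun k => fsum m (fun l => vnorm (w' (phi k) l)))).
    - apply (fsum_cv m (fun k l => vnorm (w' (phi k) l))). intros l. apply vnorm_cv, HW.
    - intros e he. exists 0%nat. intros k _. unfold Rdist.
      rewrite (fsum_ext m _ (fun l => / S (phi k) * vnorm (snd (yw (phi k)) l))) by (intros; apply Hw'n).
      rewrite fsum_scal. fold (S (phi k)). rewrite Rinv_l by (specialize (HSpos (phi k)); lra).
      rewrite Rminus_diag, Rabs_R0; lra. }
  rewrite (fsum_ext m _ (fun _ => 0)) in Hone. rewrite fsum_0 in Hone. lra.
  intros l. apply vnorm_zero_vec. intros j; apply HW0.
Qed.

Lemma vinner_expand n (b d : Vec n) c :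
  vinner (fun i => b i + c * d i) (fun i => b i + c * d i) = vinner b b + 2 * c * vinner b d + c * c * vinner d d.
Proof. unfold vinner. rewrite (fsum_ext n _ (fun i => (b i * b i) + (2 * c) * (b i * d i) + (c * c) * (d i * d i))).
  rewrite !fsum_plus, !fsum_scal. ring. intros; ring. Qed.

Lemma fsum_split_at m (f : Fin.t m -> R) l :
  fsum m f = f l + fsum m (fun l' => if Fin.eq_dec l l' then 0 else f l').
Proof. revert f l; induction m; intros f l. inversion l.
  pattern l; apply Fin.caseS'.
  - simpl. destruct (Fin.eq_dec Fin.F1 Fin.F1) as [_|c]; [|congruence]. ring.
  - intros q. simpl. rewrite (IHm (fun i => f (Fin.FS i)) q).
    rewrite (fsum_ext m (fun i => if Fin.eq_dec (Fin.FS q) (Fin.FS i) then 0 else f (Fin.FS i))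
      (fun i => if Fin.eq_dec q i then 0 else f (Fin.FS i))). ring.
    intros i. destruct (Fin.eq_dec (Fin.FS q) (Fin.FS i)) as [h1|h1]; destruct (Fin.eq_dec q i) as [h2|h2]; auto.
    apply Fin.FS_inj in h1; congruence. subst; congruence.
Qed.

Lemma fsum_update m (f g : Fin.t m -> R) l : (forall l', l <> l' -> f l' = g l') -> fsum m g - fsum m f = g l - f l.
Proof. intros H. rewrite (fsum_split_at m f l), (fsum_split_at m g l).
  rewrite (fsum_ext m (fun l' => if Fin.eq_dec l l' then 0 else g l') (fun l' => if Fin.eq_dec l l' then 0 else f l')). ring.
  intros l'. destruct (Fin.eq_dec l l'); [reflexivity|]. symmetry; apply H; auto. Qed.

Definition mk {m n} (z : Vec n) (y : Fin.t m -> Vec n) : Fin.t (S m) -> Vec n :=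
  fun j => Fin.caseS' j (fun _ => Vec n) z y.

Definition upd {m n} (y : Fin.t m -> Vec n) l (y' : Vec n) : Fin.t m -> Vec n :=
  fun l' => if Fin.eq_dec l l' then y' else y l'.

Definition Phi {n m} (a : Vec n) (Nw : R) (z : Vec n) (y : Fin.t m -> Vec n) : R :=
  vinner (vsub z a) (vsub z a) + Nw * fsum m (fun l => vinner (vsub (y l) z) (vsub (y l) z)).

Definition PhiP {n m} (a : Vec n) (Nw : R) (p : Fin.t (S m) -> Vec n) : R :=
  Phi a Nw (p Fin.F1) (fun l => p (Fin.FS l)).

Lemma PhiP_mk n m (a : Vec n) Nw z (y : Fin.t m -> Vec n) : PhiP a Nw (mk z y) = Phi a Nw z y.
Proof. reflexivity. Qed.

Lemma vconv_sub2 n (u w : nat -> Vec n) A B : vconv u A -> vconv w B -> vconv (fun k => vsub (u k) (w k)) (vsub A B).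
Proof. intros Hu Hw. apply coord_vconv. intros i. unfold vsub. apply CV_minus.
  apply (vconv_coord n u A Hu). apply (vconv_coord n w B Hw). Qed.

Lemma vnorm_le_of_inner n (d : Vec n) r : 0 <= r -> vinner d d <= r * r -> vnorm d <= r.
Proof. intros hr h. rewrite <- vnorm_sq in h. pose proof (vnorm_nonneg n d). nra. Qed.

Definition Sset {n m} (K : Fin.t m -> Vec n -> Prop) (x : Vec n) rho (p : Fin.t (S m) -> Vec n) : Prop :=
  vnorm (vsub (p Fin.F1) x) <= rho /\ forall l, K l (p (Fin.FS l)) /\ vnorm (vsub (p (Fin.FS l)) x) <= rho.

Lemma firstorder_y n m (K : Fin.t m -> Vec n -> Prop) x rho a Nw t p l :
  0 < rho -> 0 < Nw -> 0 < t -> Sset K x rho p ->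
  (forall q, Sset K x rho q -> PhiP a Nw p <= PhiP a Nw q) ->
  vnorm (vsub (p (Fin.FS l)) x) <= rho / 2 ->
  reg_normal (K l) (p (Fin.FS l)) (fun i => (Nw / t) * (p Fin.F1 i - p (Fin.FS l) i)).
Proof. intros hr hN ht HS Hmin Hyl.
  set (z := p Fin.F1). set (y := fun l => p (Fin.FS l)).
  apply (reg_of_quad n (K l) (y l) _ (rho / 2) (Nw / (2 * t))). lra. left; apply Rdiv_lt_0_compat; lra.
  intros y' hy' hd.
  assert (HSq : Sset K x rho (mk z (upd y l y'))).
  { split. apply HS. intros l'. simpl. unfold upd. destruct (Fin.eq_dec l l') as [e|e].
    - subst l'. split; auto. pose proof (vsub_triang n y' (y l) x). change (vnorm (vsub (y l) x) <= rho/2) in Hyl. lra.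
    - apply HS. }
  specialize (Hmin _ HSq). rewrite PhiP_mk in Hmin. unfold PhiP, Phi in Hmin. fold z in Hmin.
  set (g := fun l' => vinner (vsub (y l') z) (vsub (y l') z)).
  set (g' := fun l' => vinner (vsub (upd y l y' l') z) (vsub (upd y l y' l') z)).
  assert (Hg0 : vinner (vsub z a) (vsub z a) + Nw * fsum m g <= vinner (vsub z a) (vsub z a) + Nw * fsum m g') by exact Hmin.
  assert (Hg : Nw * fsum m g <= Nw * fsum m g') by lra.
  assert (Hg2 : fsum m g <= fsum m g') by (apply Rmult_le_reg_l with Nw; auto).
  pose proof (fsum_update m g g' l) as Hu.
  assert (Hgl : g' l = vinner (vsub y' z) (vsub y' z)).
  { unfold g', upd. destruct (Fin.eq_dec l l) as [_|c]; [reflexivity|congruence]. }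
  rewrite Hgl in Hu. specialize (Hu ltac:(intros l' hl'; unfold g, g', upd; destruct (Fin.eq_dec l l'); [congruence|reflexivity])).
  rewrite (vinner_ext n (vsub y' z) (fun i => vsub (y l) z i + 1 * vsub y' (y l) i)
      (vsub y' z) (fun i => vsub (y l) z i + 1 * vsub y' (y l) i)) in Hu by (intros; unfold vsub; ring).
  rewrite vinner_expand in Hu. assert (Hgl2 : g l = vinner (vsub (y l) z) (vsub (y l) z)) by reflexivity. rewrite Hgl2 in Hu.
  rewrite (vinner_ext n _ (fun i => (Nw / t) * ((-1) * vsub (y l) z i)) (vsub y' (y l)) (vsub y' (y l))) by (intros; unfold vsub, y, z; ring).
  rewrite vinner_scal_l, vinner_scal_l. rewrite vnorm_pow2.
  assert (- (2 * vinner (vsub (y l) z) (vsub y' (y l))) <= vinner (vsub y' (y l)) (vsub y' (y l))) by lra.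
  replace (Nw / t * (-1 * vinner (vsub (y l) z) (vsub y' (y l)))) with ((Nw / (2 * t)) * (- (2 * vinner (vsub (y l) z) (vsub y' (y l))))) by (field; lra).
  apply Rmult_le_compat_l; auto. left; apply Rdiv_lt_0_compat; lra.
Qed.

Lemma fsum_const1_nonneg m : 0 <= fsum m (fun _ : Fin.t m => 1).
Proof. apply fsum_nonneg; intros; lra. Qed.

Lemma firstorder_z n m (K : Fin.t m -> Vec n -> Prop) x rho a Nw p :
  0 < rho -> 0 < Nw -> Sset K x rho p ->
  (forall q, Sset K x rho q -> PhiP a Nw p <= PhiP a Nw q) ->
  vnorm (vsub (p Fin.F1) x) <= rho / 2 ->
  forall i, (p Fin.F1 i - a i) + Nw * fsum m (fun l => p Fin.F1 i - p (Fin.FS l) i) = 0.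
Proof. intros hr hN HS Hmin Hz.
  set (z := p Fin.F1) in *. set (y := fun l => p (Fin.FS l)).
  set (gl := fun l i => z i - y l i).
  set (g := fun i => 1 * vsub z a i + Nw * vsum gl i).
  assert (Hg : forall i, g i = 0).
  2:{ intros i. specialize (Hg i). unfold g, gl, vsum, vsub, y in Hg. lra. }
  apply vinner_self_zero.
  set (Mc := fsum m (fun _ : Fin.t m => 1)). pose proof (fsum_const1_nonneg m) as hMc. fold Mc in hMc.
  set (G := vinner g g). pose proof (vinner_self_nonneg n g) as hG. fold G in hG.
  pose proof (vnorm_nonneg n g) as hng.
  assert (h1 : 0 < / (1 + Nw * Mc)) by (apply Rinv_0_lt_compat; nra).
  assert (h2 : 0 < rho / (2 * (vnorm g + 1))) by (apply Rdiv_lt_0_compat; lra).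
  set (s := Rmin (/ (1 + Nw * Mc)) (rho / (2 * (vnorm g + 1)))).
  assert (hs : 0 < s) by (apply Rmin_pos; auto).
  assert (hs1 : s * (1 + Nw * Mc) <= 1).
  { pose proof (Rmin_l (/ (1 + Nw * Mc)) (rho / (2 * (vnorm g + 1)))). fold s in H.
    apply Rmult_le_compat_r with (r := 1 + Nw * Mc) in H; [|nra]. rewrite Rinv_l in H; nra. }
  assert (hs2 : s * vnorm g <= rho / 2).
  { pose proof (Rmin_r (/ (1 + Nw * Mc)) (rho / (2 * (vnorm g + 1)))). fold s in H.
    apply Rmult_le_compat_r with (r := vnorm g + 1) in H; [|lra].
    replace (rho / (2 * (vnorm g + 1)) * (vnorm g + 1)) with (rho / 2) in H by (field; lra). nra. }
  set (dd := fun i => (-s) * g i).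
  set (zz := fun i => z i + dd i).
  assert (HSq : Sset K x rho (mk zz y)).
  { split; [|intros l; apply HS]. simpl.
    rewrite (vnorm_ext n (vsub zz x) (fun i => vsub z x i + dd i)) by (intros; unfold vsub, zz; ring).
    eapply Rle_trans; [apply vnorm_triang|]. unfold dd. rewrite vnorm_scal. rewrite Rabs_Ropp, Rabs_pos_eq by lra. lra. }
  specialize (Hmin _ HSq). rewrite PhiP_mk in Hmin. unfold PhiP, Phi in Hmin. fold z in Hmin.
  change (fsum m (fun l => vinner (vsub (p (Fin.FS l)) z) (vsub (p (Fin.FS l)) z))) with (fsum m (fun l => vinner (vsub (y l) z) (vsub (y l) z))) in Hmin.
  rewrite (vinner_ext n (vsub zz a) (fun i => vsub z a i + 1 * dd i) (vsub zz a) (fun i => vsub z a i + 1 * dd i)) in Hmin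
    by (intros; unfold vsub, zz; ring).
  rewrite vinner_expand in Hmin.
  rewrite (fsum_ext m (fun l => vinner (vsub (y l) zz) (vsub (y l) zz))
     (fun l => vinner (vsub (y l) z) (vsub (y l) z) + (-2) * vinner (vsub (y l) z) dd + vinner dd dd * 1)) in Hmin.
  2:{ intros l. rewrite (vinner_ext n (vsub (y l) zz) (fun i => vsub (y l) z i + (-1) * dd i) (vsub (y l) zz) (fun i => vsub (y l) z i + (-1) * dd i))
    by (intros; unfold vsub, zz; ring). rewrite vinner_expand. ring. }
  rewrite !fsum_plus, fsum_scal in Hmin. rewrite (fsum_scal m (vinner dd dd) (fun _ => 1)) in Hmin. fold Mc in Hmin.
  assert (Hgd : vinner g dd = vinner (vsub z a) dd + Nw * (-1 * fsum m (fun l => vinner (vsub (y l) z) dd))).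
  { unfold g. rewrite (vinner_lin n (vsub z a) (vsum gl) dd 1 Nw). rewrite vinner_vsum.
    rewrite <- (fsum_scal m (-1)). rewrite (fsum_ext m (fun l => vinner (gl l) dd) (fun l => -1 * vinner (vsub (y l) z) dd)). ring.
    intros l. rewrite (vinner_ext n (gl l) (fun i => (-1) * vsub (y l) z i) dd dd) by (intros; unfold gl, vsub; ring).
    apply vinner_scal_l. }
  assert (Hgd2 : vinner g dd = - s * G) by (unfold dd; rewrite vinner_sym, vinner_scal_l; reflexivity).
  assert (Hdd : vinner dd dd = s * s * G).
  { unfold dd. rewrite vinner_scal_l. rewrite vinner_sym, vinner_scal_l. fold G. ring. }
  assert (0 <= 2 * (- s * G) + s * s * G + Nw * (s * s * G * Mc)) by nra.
  assert (0 <= s * G * (s * (1 + Nw * Mc) - 2)) by nra.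
  assert (s * G <= 0) by nra. nra.
Qed.

Lemma nat_above X : exists N : nat, X <= INR N.
Proof. destruct (archimed X) as [h _]. destruct (Z_lt_le_dec (up X) 0) as [l|l].
  - exists 0%nat. simpl. apply IZR_lt in l. lra.
  - exists (Z.to_nat (up X)). rewrite INR_IZR_INZ, Z2Nat.id by auto. lra. Qed.

Lemma vnorm_le_shift n (a x : Vec n) : vnorm a <= vnorm (vsub a x) + vnorm x.
Proof. rewrite (vnorm_ext n a (fun i => vsub a x i + x i)) by (intros; unfold vsub; ring). apply vnorm_triang. Qed.

Lemma Sset_bound n m (K : Fin.t m -> Vec n -> Prop) x rho p : Sset K x rho p -> forall j, vnorm (p j) <= vnorm x + rho.
Proof. intros [H1 H2] j. pattern j; apply Fin.caseS'.
  - pose proof (vnorm_le_shift n (p Fin.F1) x). lra.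
  - intros l. destruct (H2 l) as [_ h]. pose proof (vnorm_le_shift n (p (Fin.FS l)) x). lra. Qed.

Lemma Sset_closed n m (K : Fin.t m -> Vec n -> Prop) x rho : (forall l, closed_setV (K l)) ->
  forall u P, (forall k, Sset K x rho (u k)) -> (forall j, vconv (fun k => u k j) (P j)) -> Sset K x rho P.
Proof. intros HK u P Hu HP. split.
  - apply (lim_le (fun k => vnorm (vsub (u k Fin.F1) x)) (fun _ => rho)).
    apply vnorm_cv, vconv_sub, HP. apply cv_const. exists 0%nat; intros; apply Hu.
  - intros l. split.
    + apply (closed_lim n (K l) (fun k => u k (Fin.FS l))). apply HK. intros; apply Hu. apply HP.
    + apply (lim_le (fun k => vnorm (vsub (u k (Fin.FS l)) x)) (fun _ => rho)).
      apply vnorm_cv, vconv_sub, HP. apply cv_const. exists 0%nat; intros; apply Hu.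
Qed.

Lemma PhiP_cv n m (a : Vec n) Nw (u : nat -> Fin.t (S m) -> Vec n) P :
  (forall j, vconv (fun k => u k j) (P j)) -> Un_cv (fun k => PhiP a Nw (u k)) (PhiP a Nw P).
Proof. intros HP. unfold PhiP, Phi. apply CV_plus.
  - apply vinner_cv; apply vconv_sub, HP.
  - apply CV_mult. apply cv_const.
    apply (fsum_cv m (fun k l => vinner (vsub (u k (Fin.FS l)) (u k Fin.F1)) (vsub (u k (Fin.FS l)) (u k Fin.F1)))).
    intros l. apply vinner_cv; apply vconv_sub2; apply HP.
Qed.

Lemma PhiP_nonneg n m (a : Vec n) Nw (p : Fin.t (S m) -> Vec n) : 0 <= Nw -> 0 <= PhiP a Nw p.
Proof. intros h. unfold PhiP, Phi. pose proof (vinner_self_nonneg n (vsub (p Fin.F1) a)).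
  assert (0 <= fsum m (fun l => vinner (vsub (p (Fin.FS l)) (p Fin.F1)) (vsub (p (Fin.FS l)) (p Fin.F1))))
    by (apply fsum_nonneg; intros; apply vinner_self_nonneg). nra. Qed.

Lemma Sset_x n m (K : Fin.t m -> Vec n -> Prop) x rho : 0 < rho -> inter_sets K x -> Sset K x rho (mk x (fun _ => x)).
Proof. intros hr Hx. assert (vnorm (vsub x x) = 0) by (apply vnorm_zero_vec; intros; unfold vsub; ring).
  split. simpl. lra. intros l; simpl. split; auto. lra. Qed.

Lemma min_Phi n m (K : Fin.t m -> Vec n -> Prop) x rho a Nw : 0 < rho -> 0 <= Nw ->
  (forall l, closed_setV (K l)) -> inter_sets K x ->
  exists p, Sset K x rho p /\ forall q, Sset K x rho q -> PhiP a Nw p <= PhiP a Nw q.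
Proof. intros hr hN HK Hx.
  apply (exists_min (S m) n (Sset K x rho) (PhiP a Nw) (vnorm x + rho)).
  - exists (mk x (fun _ => x)). apply Sset_x; auto.
  - apply Sset_bound.
  - intros u P Hu HP. split. apply (Sset_closed n m K x rho HK u P Hu HP). apply PhiP_cv; auto.
  - intros; apply PhiP_nonneg; auto.
Qed.

Lemma fuzzy n m (K : Fin.t m -> Vec n -> Prop) x v eps eta :
  (forall l, closed_setV (K l)) -> inter_sets K x -> reg_normal (inter_sets K) x v -> 0 < eps -> 0 < eta ->
  exists y w : Fin.t m -> Vec n,
    (forall l, K l (y l) /\ vnorm (vsub (y l) x) <= eta /\ reg_normal (K l) (y l) (w l)) /\
    vnorm (vsub v (vsum w)) <= eps.
Proof. intros HK Hx Hv he heta.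
  destruct (Hv (eps / 4)) as [dl [hdl Hdl]]. lra.
  set (rho := Rmin dl eta / 2).
  assert (hr : 0 < rho) by (unfold rho; pose proof (Rmin_pos dl eta hdl heta); lra).
  assert (hrd : rho < dl) by (unfold rho; pose proof (Rmin_l dl eta); pose proof (Rmin_pos dl eta hdl heta); lra).
  assert (hre : rho <= eta / 2) by (unfold rho; pose proof (Rmin_r dl eta); lra).
  set (t := rho / (4 * (eps + 1))).
  assert (ht : 0 < t) by (unfold t; apply Rdiv_lt_0_compat; lra).
  assert (hte : t * eps <= rho / 4).
  { unfold t. replace (rho / (4 * (eps + 1)) * eps) with (rho / 4 * (eps / (eps + 1))) by (field; lra).
    assert (eps / (eps + 1) <= 1). { apply (Rmult_le_reg_r (eps + 1)). lra. field_simplify; lra. } nra. }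
  set (a := fun i => x i + t * v i).
  set (T := t * t * vinner v v).
  pose proof (vinner_self_nonneg n v) as hvv.
  assert (hT : 0 <= T) by (unfold T; nra).
  assert (Hex : forall N : nat, exists p, Sset K x rho p /\ forall q, Sset K x rho q -> PhiP a (INR N + 1) p <= PhiP a (INR N + 1) q).
  { intros N. apply min_Phi; auto. pose proof (pos_INR N); lra. }
  destruct (choice_fun _ Hex) as [pN HpN].
  assert (HPx : forall Nw, @PhiP n m a Nw (mk x (fun _ => x)) = T).
  { intros Nw. rewrite PhiP_mk. unfold Phi.
    rewrite (vinner_ext n (vsub x a) (fun i => (-t) * v i) (vsub x a) (fun i => (-t) * v i)) by (intros; unfold vsub, a; ring).
    rewrite vinner_scal_l, vinner_sym, vinner_scal_l.
    rewrite (fsum_ext m _ (fun _ => 0)). rewrite fsum_0. unfold T; ring.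
    intros; apply vinner_zero_l; intros; unfold vsub; ring. }
  assert (HbN : forall N, PhiP a (INR N + 1) (pN N) <= T).
  { intros N. rewrite <- (HPx (INR N + 1)). apply HpN. apply Sset_x; auto. }
  assert (Hb1 : forall N, vinner (vsub (pN N Fin.F1) a) (vsub (pN N Fin.F1) a) <= T).
  { intros N. specialize (HbN N). unfold PhiP, Phi in HbN. pose proof (pos_INR N).
    assert (0 <= fsum m (fun l => vinner (vsub (pN N (Fin.FS l)) (pN N Fin.F1)) (vsub (pN N (Fin.FS l)) (pN N Fin.F1))))
      by (apply fsum_nonneg; intros; apply vinner_self_nonneg). nra. }
  assert (Hb2 : forall N l, (INR N + 1) * vinner (vsub (pN N (Fin.FS l)) (pN N Fin.F1)) (vsub (pN N (Fin.FS l)) (pN N Fin.F1)) <= T).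
  { intros N l. specialize (HbN N). unfold PhiP, Phi in HbN. pose proof (pos_INR N).
    pose proof (fsum_ge_term m (fun l => vinner (vsub (pN N (Fin.FS l)) (pN N Fin.F1)) (vsub (pN N (Fin.FS l)) (pN N Fin.F1)))
      (fun l => vinner_self_nonneg _ _) l). simpl in H0.
    pose proof (vinner_self_nonneg n (vsub (pN N Fin.F1) a)). nra. }
  destruct (nat_above (T / ((rho / 4) * (rho / 4)))) as [N0 HN0].
  assert (HN : exists N, (N0 <= N)%nat /\ vnorm (vsub (pN N Fin.F1) x) <= t * eps).
  { apply NNPP. intros Hn.
    assert (Hgt : forall k, t * eps < vnorm (vsub (pN (N0 + k)%nat Fin.F1) x)).
    { intros k. apply Rnot_le_lt. intros hle. apply Hn. exists (N0 + k)%nat. split; auto; lia. }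
    destruct (extr_vec (S m) n (fun k => pN (N0 + k)%nat) (vnorm x + rho)) as [phi [Hphi [P HP]]].
    { intros k j. apply (Sset_bound n m K x rho). apply HpN. }
    assert (HSP : Sset K x rho P).
    { apply (Sset_closed n m K x rho HK (fun k => pN (N0 + phi k)%nat)); auto. intros; apply HpN. }
    set (zb := P Fin.F1).
    assert (Hyz : forall l, vnorm (vsub (P (Fin.FS l)) zb) = 0).
    { intros l. apply vnorm_zero_vec. apply vinner_self_zero. apply Rle_antisym; [|apply vinner_self_nonneg].
      replace 0 with (T * 0) by ring.
      apply (lim_le (fun k => vinner (vsub (pN (N0 + phi k)%nat (Fin.FS l)) (pN (N0 + phi k)%nat Fin.F1))
                                     (vsub (pN (N0 + phi k)%nat (Fin.FS l)) (pN (N0 + phi k)%nat Fin.F1)))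
                    (fun k => T * / (INR k + 1))).
      - apply vinner_cv; apply vconv_sub2; apply HP.
      - apply CV_mult. apply cv_const. apply cv_inv0.
      - exists 0%nat. intros k _. specialize (Hb2 (N0 + phi k)%nat l).
        set (A := vinner (vsub (pN (N0 + phi k)%nat (Fin.FS l)) (pN (N0 + phi k)%nat Fin.F1))
                                     (vsub (pN (N0 + phi k)%nat (Fin.FS l)) (pN (N0 + phi k)%nat Fin.F1))) in *.
        assert (0 <= A) by apply vinner_self_nonneg.
        pose proof (inc_ge phi Hphi k). assert (INR k <= INR (N0 + phi k)) by (apply le_INR; lia).
        pose proof (pos_INR k).
        apply (Rmult_le_reg_r (INR k + 1)). lra. rewrite Rmult_assoc, Rinv_l by lra. nra. }
    assert (HzK : inter_sets K zb).
    { intros l. apply (HK l). intros e he'. exists (P (Fin.FS l)). split. apply HSP.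
      rewrite vsub_sym, Hyz. auto. }
    assert (Hza : vinner (vsub zb a) (vsub zb a) <= T).
    { apply (lim_le (fun k => vinner (vsub (pN (N0 + phi k)%nat Fin.F1) a) (vsub (pN (N0 + phi k)%nat Fin.F1) a)) (fun _ => T)).
      apply vinner_cv; apply vconv_sub, HP. apply cv_const. exists 0%nat; intros; apply Hb1. }
    assert (Hzx : t * eps <= vnorm (vsub zb x)).
    { apply (lim_le (fun _ => t * eps) (fun k => vnorm (vsub (pN (N0 + phi k)%nat Fin.F1) x))).
      apply cv_const. apply vnorm_cv, vconv_sub, HP. exists 0%nat; intros; left; apply Hgt. }
    assert (Hzr : vnorm (vsub zb x) < dl) by (destruct HSP as [h _]; unfold zb; lra).
    specialize (Hdl zb HzK Hzr).
    rewrite (vinner_ext n (vsub zb a) (fun i => vsub zb x i + (-t) * v i) (vsub zb a) (fun i => vsub zb x i + (-t) * v i)) in Hza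
      by (intros; unfold vsub, a; ring).
    rewrite vinner_expand in Hza. rewrite vinner_sym in Hdl. rewrite <- vnorm_sq in Hza. unfold T in Hza.
    pose proof (vnorm_nonneg n (vsub zb x)).
    assert (vnorm (vsub zb x) * vnorm (vsub zb x) <= (t * eps / 2) * vnorm (vsub zb x)) by nra.
    assert (vnorm (vsub zb x) <= t * eps / 2). { destruct (Rle_or_lt (vnorm (vsub zb x)) (t * eps / 2)) as [hh|hh]; auto. assert (0 < t * eps) by nra. nra. }
    nra. }
  destruct HN as [N [HN1 HN2]].
  set (Nw := INR N + 1). set (p := pN N). set (z := p Fin.F1). set (y := fun l => p (Fin.FS l)).
  assert (hNw : 0 < Nw) by (unfold Nw; pose proof (pos_INR N); lra).
  assert (HNw : T <= Nw * ((rho / 4) * (rho / 4))).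
  { apply le_INR in HN1. unfold Nw.
    assert (T / (rho / 4 * (rho / 4)) * (rho / 4 * (rho / 4)) = T) by (field; lra).
    assert (0 < rho / 4 * (rho / 4)) by nra. nra. }
  assert (Hyz : forall l, vnorm (vsub (y l) z) <= rho / 4).
  { intros l. apply vnorm_le_of_inner. lra. specialize (Hb2 N l). fold Nw p z in Hb2.
    pose proof (vinner_self_nonneg n (vsub (y l) z)). 
    assert (Nw * vinner (vsub (y l) z) (vsub (y l) z) <= Nw * (rho / 4 * (rho / 4))) by (unfold y; lra).
    apply Rmult_le_reg_l in H0; auto. }
  assert (Hzx : vnorm (vsub z x) <= rho / 4) by (unfold z, p; lra).
  assert (Hyx : forall l, vnorm (vsub (y l) x) <= rho / 2).
  { intros l. pose proof (vsub_triang n (y l) z x). specialize (Hyz l). lra. }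
  destruct (HpN N) as [HSp Hminp]. fold p in HSp, Hminp.
  exists y, (fun l i => (Nw / t) * (z i - y l i)). split.
  - intros l. split; [apply HSp|]. split. specialize (Hyx l); lra.
    apply (firstorder_y n m K x rho a Nw t p l); auto. apply Hyx.
  - pose proof (firstorder_z n m K x rho a Nw p hr hNw HSp Hminp ltac:(fold z; lra)) as Hfo.
    rewrite (vnorm_ext n _ (fun i => / t * vsub z x i)).
    rewrite vnorm_scal. rewrite Rabs_pos_eq by (left; apply Rinv_0_lt_compat; auto).
    apply (Rmult_le_reg_l t); auto. rewrite <- Rmult_assoc, Rinv_r by lra. change (vnorm (vsub z x) <= t * eps) in HN2. lra.
    intros i. specialize (Hfo i). fold z in Hfo. unfold vsub, vsum.
    rewrite (fsum_ext m (fun l => Nw / t * (z i - y l i)) (fun l => / t * (Nw * (z i - p (Fin.FS l) i)))) by (intros; unfold y; field; lra).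
    rewrite fsum_scal, fsum_scal. unfold a in Hfo.
    assert (E : Nw * fsum m (fun l => z i - p (Fin.FS l) i) = x i + t * v i - z i) by lra. rewrite E. field. lra.
Qed.

Definition SOSHb {n} (C : Vec n -> Prop) (xb : Vec n) d M : Prop :=
  forall x, C x -> vnorm (vsub x xb) <= d -> x <> xb ->
      forall v, lim_normal C x v -> vnorm v = 1 ->
        vinner v (vsub x xb) <= M * (vnorm (vsub xb x)) ^ 2.

Lemma sosh_term n (C : Vec n -> Prop) xb d M y w : 0 <= M -> SOSHb C xb d M -> C y -> vnorm (vsub y xb) <= d ->
  reg_normal C y w -> vinner w (vsub y xb) <= M * vnorm w * vnorm (vsub y xb) ^ 2.
Proof. intros hM HS hy hyd hw. pose proof (vnorm_nonneg n w). pose proof (vnorm_nonneg n (vsub y xb)).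
  assert (hR : 0 <= M * vnorm w * vnorm (vsub y xb)^2) by (apply Rmult_le_pos; [apply Rmult_le_pos|apply pow2_ge_0]; auto).
  destruct (classic (y = xb)) as [e|hne].
  - rewrite vinner_sym, vinner_zero_l. auto. intros; unfold vsub; rewrite e; ring.
  - destruct (Req_dec (vnorm w) 0) as [h0|h0].
    + rewrite vinner_zero_l. auto. apply vnorm_zero; auto.
    + set (u := fun i => / vnorm w * w i).
      assert (hu1 : vnorm u = 1). { unfold u. rewrite vnorm_scal, Rabs_pos_eq. field; auto. left; apply Rinv_0_lt_compat; lra. }
      assert (Hu : lim_normal C y u). { apply reg_lim; auto. apply reg_scal; auto. left; apply Rinv_0_lt_compat; lra. }
      specialize (HS y hy hyd hne u Hu hu1). rewrite vsub_sym in HS.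
      unfold u in HS. rewrite vinner_scal_l in HS.
      apply (Rmult_le_compat_l (vnorm w)) in HS; auto. rewrite <- Rmult_assoc, Rinv_r in HS by auto. nra.
Qed.

Lemma le_eps A B Q e0 : (forall e, 0 < e -> e <= e0 -> A <= B + e * Q) -> 0 < e0 -> 0 <= Q -> A <= B.
Proof. intros H he0 hQ. apply Rnot_lt_le. intros hlt.
  set (e := Rmin e0 ((A - B) / (2 * (Q + 1)))).
  assert (he : 0 < e) by (apply Rmin_pos; auto; apply Rdiv_lt_0_compat; lra).
  specialize (H e he (Rmin_l _ _)). pose proof (Rmin_r e0 ((A - B) / (2 * (Q + 1)))). fold e in H0.
  apply (Rmult_le_compat_r (2 * (Q + 1))) in H0; [|lra].
  replace ((A - B) / (2 * (Q + 1)) * (2 * (Q + 1))) with (A - B) in H0 by (field; lra). nra. Qed.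

Lemma vsum_norm_le n m (v : Vec n) (w : Fin.t m -> Vec n) : vnorm (vsum w) <= vnorm v + vnorm (vsub v (vsum w)).
Proof. rewrite (vnorm_ext n (vsum w) (fun i => v i + (-1) * vsub v (vsum w) i)) by (intros; unfold vsub; ring).
  eapply Rle_trans; [apply vnorm_triang|]. rewrite vnorm_scal. replace (Rabs (-1)) with 1. lra. rewrite Rabs_left; lra. Qed.

Lemma decomp n m (v x xb : Vec n) (y w : Fin.t m -> Vec n) :
  vinner v (vsub x xb) = vinner (vsub v (vsum w)) (vsub x xb) + fsum m (fun l => vinner (w l) (vsub x (y l)))
     + fsum m (fun l => vinner (w l) (vsub (y l) xb)).
Proof. rewrite Rplus_assoc, <- fsum_plus.
  rewrite (fsum_ext m _ (fun l => vinner (w l) (vsub x xb))).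
  rewrite <- vinner_vsum. rewrite <- (Rmult_1_l (vinner (vsub v (vsum w)) (vsub x xb))).
  rewrite <- (Rmult_1_l (vinner (vsum w) (vsub x xb))). rewrite <- vinner_lin.
  apply vinner_ext; intros; unfold vsub; ring.
  intros l. rewrite !(vinner_sym n (w l)). rewrite <- (Rmult_1_l (vinner (vsub x (y l)) (w l))).
  rewrite <- (Rmult_1_l (vinner (vsub (y l) xb) (w l))). rewrite <- vinner_lin.
  apply vinner_ext; intros; unfold vsub; ring.
Qed.

Lemma main_est n m (K : Fin.t m -> Vec n -> Prop) xb r C ds Ms :
  (forall l, closed_setV (K l)) -> 0 < r -> 0 < C -> 0 < ds -> 0 < Ms ->
  (forall (y w : Fin.t m -> Vec n),
    (forall l, K l (y l) /\ vnorm (vsub (y l) xb) < r /\ reg_normal (K l) (y l) (w l)) ->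
    fsum m (fun l => vnorm (w l)) <= C * vnorm (vsum w)) ->
  (forall l, SOSHb (K l) xb ds Ms) ->
  forall x v, inter_sets K x -> vnorm (vsub x xb) < Rmin r ds / 2 -> reg_normal (inter_sets K) x v ->
  vinner v (vsub x xb) <= C * Ms * vnorm v * (vnorm (vsub x xb) * vnorm (vsub x xb)).
Proof. intros HK hr hC hds hMs HA HS x v Hx Hxd Hv.
  set (r1 := Rmin r ds / 2) in *.
  assert (hr1 : r1 < r /\ r1 < ds).
  { unfold r1. pose proof (Rmin_l r ds); pose proof (Rmin_r r ds); pose proof (Rmin_pos r ds hr hds). lra. }
  set (d := vnorm (vsub x xb)) in *. pose proof (vnorm_nonneg n (vsub x xb)) as hd. fold d in hd.
  pose proof (vnorm_nonneg n v) as hv. set (nv := vnorm v) in *.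
  set (Q := d + C * (nv + 1) + C * Ms * (nv * (2 * d + 1) + (d + 1) * (d + 1))).
  apply (le_eps _ _ Q (Rmin 1 (r1 - d))).
  2: { apply Rmin_pos; lra. }
  2: { unfold Q. assert (h1 : 0 <= nv * (2 * d + 1) + (d + 1) * (d + 1)) by nra.
       assert (h2 : 0 <= C * (nv + 1)) by (apply Rmult_le_pos; lra).
       assert (h3 : 0 <= C * Ms * (nv * (2 * d + 1) + (d + 1) * (d + 1))) by (apply Rmult_le_pos; [apply Rmult_le_pos|]; lra). lra. }
  intros e he hee. pose proof (Rmin_l 1 (r1 - d)); pose proof (Rmin_r 1 (r1 - d)).
  destruct (fuzzy n m K x v e e HK Hx Hv he he) as [y [w [Hyw Hvw]]].
  assert (Hyb : forall l, vnorm (vsub (y l) xb) <= d + e).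
  { intros l. pose proof (vsub_triang n (y l) x xb). destruct (Hyw l) as [_ [h _]]. fold d in H1. lra. }
  assert (HSw : fsum m (fun l => vnorm (w l)) <= C * (nv + e)).
  { eapply Rle_trans. apply (HA y w). intros l. destruct (Hyw l) as [h1 [h2 h3]]. split; auto. split; auto.
    specialize (Hyb l). lra. apply Rmult_le_compat_l. lra. pose proof (vsum_norm_le n m v w). fold nv in H1. lra. }
  set (S := fsum m (fun l => vnorm (w l))) in *.
  assert (hS : 0 <= S) by (apply fsum_nonneg; intros; apply vnorm_nonneg).
  rewrite (decomp n m v x xb y w).
  assert (T1 : vinner (vsub v (vsum w)) (vsub x xb) <= e * d).
  { eapply Rle_trans. apply CS'. fold d. apply Rmult_le_compat_r; auto. }
  assert (T2 : fsum m (fun l => vinner (w l) (vsub x (y l))) <= S * e).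
  { unfold S. rewrite <- fsum_scal_r. apply fsum_le. intros l. eapply Rle_trans. apply CS'.
    apply Rmult_le_compat_l. apply vnorm_nonneg. rewrite vsub_sym. apply Hyw. }
  assert (T3 : fsum m (fun l => vinner (w l) (vsub (y l) xb)) <= S * (Ms * ((d + e) * (d + e)))).
  { unfold S. rewrite <- fsum_scal_r. apply fsum_le. intros l. destruct (Hyw l) as [h1 [h2 h3]].
    eapply Rle_trans. apply (sosh_term n (K l) xb ds Ms (y l) (w l)); auto. lra. specialize (Hyb l). lra.
    pose proof (vnorm_nonneg n (vsub (y l) xb)). pose proof (vnorm_nonneg n (w l)). specialize (Hyb l).
    assert (hq : vnorm (vsub (y l) xb) ^ 2 <= (d + e) * (d + e)) by (simpl; rewrite Rmult_1_r; apply Rmult_le_compat; lra).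
    assert (0 <= Ms * vnorm (w l)) by (apply Rmult_le_pos; lra).
    apply (Rmult_le_compat_l (Ms * vnorm (w l))) in hq; auto. lra. }
  assert (he1 : e <= 1) by lra.
  assert (A0 : S <= C * (nv + 1)) by (eapply Rle_trans; [exact HSw|]; apply Rmult_le_compat_l; lra).
  assert (A1 : S * e <= e * (C * (nv + 1))) by (rewrite Rmult_comm; apply Rmult_le_compat_l; lra).
  assert (hX : 0 <= Ms * ((d + e) * (d + e))) by (apply Rmult_le_pos; [lra|nra]).
  assert (A2 : S * (Ms * ((d + e) * (d + e))) <= C * (nv + e) * (Ms * ((d + e) * (d + e)))) by (apply Rmult_le_compat_r; auto).
  assert (A3 : (nv + e) * ((d + e) * (d + e)) <= nv * (d * d) + e * (nv * (2 * d + 1) + (d + 1) * (d + 1))).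
  { assert (e * e <= e) by nra. assert ((d + e) * (d + e) <= (d + 1) * (d + 1)) by nra.
    replace ((nv + e) * ((d + e) * (d + e))) with (nv * (d * d) + nv * (2 * d * e + e * e) + e * ((d + e) * (d + e))) by ring.
    assert (nv * (2 * d * e + e * e) <= nv * (e * (2 * d + 1))) by nra. nra. }
  assert (A4 : C * (nv + e) * (Ms * ((d + e) * (d + e))) <= C * Ms * (nv * (d * d) + e * (nv * (2 * d + 1) + (d + 1) * (d + 1)))).
  { replace (C * (nv + e) * (Ms * ((d + e) * (d + e)))) with (C * Ms * ((nv + e) * ((d + e) * (d + e)))) by ring.
    apply Rmult_le_compat_l; auto. nra. }
  unfold Q. nra.
Qed.

Theorem proposition4p4 (n m : nat) (K : Fin.t m -> Vec n -> Prop) (xb : Vec n) :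
  (forall l, closed_setV (K l)) ->
  inter_sets K xb ->
  (forall l, SOSH (K l) xb) ->
  lin_reg_inter K xb ->
  SOSH (inter_sets K) xb.
Proof. intros HK Hxb HS Hlr.
  destruct (unifA n m K xb Hlr) as [r [C [hr [hC HA]]]].
  destruct (unif_fin m (fun l d M => SOSHb (K l) xb d M)) as [ds [Ms [hds [hMs HSb]]]].
  { intros l d d' M M' H [h1 h2] hM x hx hxd hne v Hv hv1. eapply Rle_trans. apply (H x hx ltac:(lra) hne v Hv hv1).
    apply Rmult_le_compat_r; auto. apply pow2_ge_0. }
  { intros l. exact (HS l). }
  set (r1 := Rmin r ds / 2).
  assert (hr1 : 0 < r1) by (unfold r1; pose proof (Rmin_pos r ds hr hds); lra).
  exists (r1 / 2), (C * Ms). split. lra. split. nra.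
  intros x hx hxd hne v [xs [ys [Hxs [Hys [Hcx Hcy]]]]] hv1.
  assert (Hlim : vinner v (vsub x xb) <= C * Ms * vnorm v * (vnorm (vsub x xb) * vnorm (vsub x xb))).
  { apply (lim_le (fun k => vinner (ys k) (vsub (xs k) xb))
                  (fun k => C * Ms * vnorm (ys k) * (vnorm (vsub (xs k) xb) * vnorm (vsub (xs k) xb)))).
    - apply vinner_cv; auto. apply vconv_sub; auto.
    - apply CV_mult. apply CV_mult. apply cv_const. apply vnorm_cv; auto.
      apply CV_mult; apply vnorm_cv, vconv_sub; auto.
    - destruct (Hcx (r1 / 2)) as [N HN]. lra. exists N. intros k hk.
      apply (main_est n m K xb r C ds Ms HK hr hC hds hMs HA HSb); auto.
      pose proof (vsub_triang n (xs k) x xb). specialize (HN k hk). fold r1. lra. }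
  rewrite hv1 in Hlim. rewrite vsub_sym. nra.
Qed.
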